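(* Let $(p_n)_{n \ge 1}$ be a strictly increasing sequence of prime numbers and fix $\ell \in \mathbb{N}$. Then the Puiseux monoid $\left\langle \frac{1}{p_n p_{n+\ell}} \;\middle|\; n \in \mathbb{N} \right\rangle$ is atomic.
   Context: A Puiseux monoid is an additive submonoid of $(\mathbb{Q}_{\ge 0},+)$; $\langle S \rangle$ denotes the submonoid generated by $S$. An atom of $M$ is a nonzero element $a$ such that $a = x+y$ with $x,y \in M$ forces $x=0$ or $y=0$; $M$ is atomic if every element of $M$ is a finite sum of atoms. *)

(* Defs.v *)
From mathcomp Require Import all_boot all_order all_algebra.
Set Implicit Arguments. Unset Strict Implicit. Unset Printing Implicit Defensive.
Import Order.TTheory GRing.Theory Num.Theory.
Local Open Scope ring_scope.

Definition gen_monoid (S : rat -> Prop) : rat -> Prop :=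
  fun x => exists s : seq rat, (forall a, a \in s -> S a) /\ x = \sum_(a <- s) a.

Definition is_atom (M : rat -> Prop) (a : rat) : Prop :=
  M a /\ a != 0 /\
  forall x y, M x -> M y -> a = x + y -> x = 0 \/ y = 0.

Definition atomic (M : rat -> Prop) : Prop :=
  forall x, M x ->
    exists s : seq rat, (forall a, a \in s -> is_atom M a) /\ x = \sum_(a <- s) a.

(* Main.v *)
Require Import Defs.
From mathcomp Require Import all_boot all_order all_algebra.
From mathcomp Require Import ring lra zify.
Import Order.TTheory GRing.Theory Num.Theory.
Set Implicit Arguments. Unset Strict Implicit.
Local Open Scope ring_scope.

Lemma pmono (p : nat -> nat)
  (hincr : forall n, (0 < n)%N -> (p n < p n.+1)%N) i j :
  (0 < i)%N -> (i < j)%N -> (p i < p j)%N.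
Proof.
move=> i0; elim: j => // j IH; rewrite ltnS leq_eqVlt => /orP[/eqP<-|ij].
  exact: hincr.
apply: ltn_trans (IH ij) (hincr _ _); exact: leq_trans i0 (ltnW ij).
Qed.

Lemma pmono_le (p : nat -> nat)
  (hincr : forall n, (0 < n)%N -> (p n < p n.+1)%N) i j :
  (0 < i)%N -> (i <= j)%N -> (p i <= p j)%N.
Proof.
move=> i0; rewrite leq_eqVlt => /orP[/eqP->//|ij].
exact: ltnW (pmono hincr i0 ij).
Qed.

Lemma sum_frac (q : nat) (qp : prime q) (t : seq rat) :
  (forall g, g \in t -> exists d : nat, (0 < d)%N /\ ~~ (q %| d)%N /\ g = (d%:R)^-1) ->
  exists N D : nat, (0 < D)%N /\ ~~ (q %| D)%N /\ \sum_(g <- t) g = N%:R / D%:R.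
Proof.
elim: t => [|g t IH] H.
  exists 0%N, 1%N; rewrite big_nil mul0r; split=> //; split=> //; rewrite dvdn1; apply/eqP => q1; by move: (prime_gt1 qp); rewrite q1.
have [d [d0 [qd ->]]] := H g (mem_head _ _).
have [|N [D [D0 [qD Et]]]] := IH.
  by move=> x xt; apply: H; rewrite in_cons xt orbT.
exists (D + N * d)%N, (d * D)%N; split; first by rewrite muln_gt0 d0.
split; first by rewrite Euclid_dvdM // negb_or qd.
rewrite big_cons Et natrD !natrM.
have hd : (d%:R : rat) != 0 by rewrite pnatr_eq0 -lt0n.
have hD : (D%:R : rat) != 0 by rewrite pnatr_eq0 -lt0n.
by field; rewrite hd hD.
Qed.

Definition gens (p : nat -> nat) (l : nat) (q : rat) :=
  exists n : nat, (0 < n)%N /\ q = ((p n * p (n + l)%N)%N%:R)^-1.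

Lemma gens_pos p l (hprime : forall n, (0 < n)%N -> prime (p n)) q :
  gens p l q -> 0 < q.
Proof.
move=> [n [n0 ->]]; rewrite invr_gt0 ltr0n muln_gt0.
by rewrite !prime_gt0 // ?hprime // addn_gt0 n0.
Qed.

Lemma sum_ge0 p l (hprime : forall n, (0 < n)%N -> prime (p n)) (s : seq rat) :
  (forall a, a \in s -> gens p l a) -> 0 <= \sum_(a <- s) a.
Proof.
move=> H; rewrite big_seq; apply: sumr_ge0 => a /H /(gens_pos hprime).
exact: ltW.
Qed.

Lemma le_sum p l (hprime : forall n, (0 < n)%N -> prime (p n)) (s : seq rat) g :
  (forall a, a \in s -> gens p l a) -> g \in s -> g <= \sum_(a <- s) a.
Proof.
elim: s => // x s IH H; rewrite in_cons big_cons => /orP[/eqP->|gs].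
  by rewrite lerDl; apply: (sum_ge0 hprime) => a as_; apply: H; rewrite in_cons as_ orbT.
have := IH (fun a as_ => H a (ltac:(by rewrite in_cons as_ orbT))) gs.
have := gens_pos hprime (H x (mem_head _ _)); lra.
Qed.

Lemma atom_gen (p : nat -> nat) (l : nat)
  (hprime : forall n, (0 < n)%N -> prime (p n))
  (hincr : forall n, (0 < n)%N -> (p n < p n.+1)%N) n :
  (0 < n)%N -> is_atom (gen_monoid (gens p l)) ((p n * p (n + l)%N)%N%:R)^-1.
Proof.
move=> n0.
have nl0 : (0 < n + l)%N by rewrite addn_gt0 n0.
have pn := hprime n n0.
have pn1 : p n != 1%N by rewrite neq_ltn prime_gt1 ?orbT.
split.
  exists [:: ((p n * p (n + l)%N)%N%:R)^-1]; split; last by rewrite big_seq1.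
  by move=> a; rewrite inE => /eqP->; exists n.
split.
  by rewrite invr_eq0 pnatr_eq0 muln_eq0 negb_or -!lt0n !prime_gt0 ?hprime.
move=> x y [sx [Hsx ->]] [sy [Hsy ->]] E.
have x0 := sum_ge0 hprime Hsx; have y0 := sum_ge0 hprime Hsy.
case: (eqVneq (\sum_(a <- sx) a) 0) => [->|nx]; first by left.
case: (eqVneq (\sum_(a <- sy) a) 0) => [->|ny]; first by right.
exfalso.
set A := ((p n * p (n + l)%N)%N%:R)^-1 : rat.
have xp : 0 < \sum_(a <- sx) a by rewrite lt0r nx x0.
have yp : 0 < \sum_(a <- sy) a by rewrite lt0r ny y0.
have Hlt : forall g, g \in sx ++ sy -> gens p l g /\ g < A.
  move=> g; rewrite mem_cat => /orP[] gs.
    split; first exact: Hsx.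
    have := le_sum hprime Hsx gs; rewrite /A E; lra.
  split; first exact: Hsy.
  have := le_sum hprime Hsy gs; rewrite /A E; lra.
have [N [D [D0 [qD ED]]]] : exists N D : nat,
   (0 < D)%N /\ ~~ (p n %| D)%N /\ \sum_(g <- sx ++ sy) g = N%:R / D%:R.
  apply: sum_frac => // g /Hlt [[k [k0 ->]] glt].
  have kl0 : (0 < k + l)%N by rewrite addn_gt0 k0.
  exists (p k * p (k + l))%N; split.
    by rewrite muln_gt0 !prime_gt0 ?hprime.
  split=> //.
  have nk : (n < k)%N.
    rewrite ltnNge; apply/negP => kn.
    move: glt; rewrite /A ltf_pV2 ?posrE ?ltr0n ?muln_gt0 ?prime_gt0 ?hprime //.
    rewrite ltr_nat ltnNge => /negP; apply.
    apply: leq_mul; apply: (pmono_le hincr) => //; lia.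
  rewrite Euclid_dvdM // negb_or; apply/andP; split; apply/negP.
    move/(prime_nt_dvdP (hprime k k0) pn1) => E2.
    by have := pmono hincr n0 nk; rewrite E2 ltnn.
  move/(prime_nt_dvdP (hprime (k + l)%N kl0) pn1) => E2.
  have : (n < k + l)%N by lia.
  by move/(pmono hincr n0); rewrite E2 ltnn.
move: ED; rewrite big_cat /= -E /A => ED.
have hD : (D%:R : rat) != 0 by rewrite pnatr_eq0 -lt0n.
have hP : ((p n * p (n + l))%N%:R : rat) != 0.
  by rewrite pnatr_eq0 muln_eq0 negb_or -!lt0n !prime_gt0 ?hprime.
have e2 : (N%:R : rat) = D%:R * ((p n * p (n + l))%N%:R)^-1.
  by rewrite ED mulrC divfK.
have h : (D%:R : rat) = N%:R * (p n * p (n + l))%N%:R.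
  by rewrite e2 -mulrA mulVf // mulr1.
move: h; rewrite -natrM => /eqP; rewrite eqr_nat => /eqP h.
move: qD; rewrite h => /negP; apply.
by apply: dvdn_mull; apply: dvdn_mulr; exact: dvdnn.
Qed.

Theorem proposition3p7 (p : nat -> nat) (l : nat)
  (hprime : forall n, (0 < n)%N -> prime (p n))
  (hincr : forall n, (0 < n)%N -> (p n < p n.+1)%N) :
  atomic (gen_monoid (fun q : rat =>
    exists n : nat, (0 < n)%N /\ q = ((p n * p (n + l)%N)%N%:R)^-1)).
Proof.
move=> x [s [Hs ->]]; exists s; split=> // a /Hs [n [n0 ->]].
exact: (atom_gen l hprime hincr n0).
Qed.
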